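(* Let $P=\Bbbk[x_1,x_2,x_3]$ with Poisson bracket $\{x_1,x_2\}=0$, $\{x_2,x_3\}=2x_1x_2$, $\{x_3,x_1\}=x_1^2$. Then \[ \mathrm{PAut}_{\mathrm{gr}}(P)=\left\{\begin{bmatrix}a&0&0\\0&b&0\\c&d&a\end{bmatrix}: a,b\in\Bbbk^\times,\ c,d\in\Bbbk\right\},\qquad \mathrm{PR}(P)=\left\{\begin{bmatrix}1&0&0\\0&\xi&0\\0&d&1\end{bmatrix}: \xi\neq1 \text{ a root of unity},\ d\in\Bbbk\right\}. \]
   Context: $\Bbbk$ is algebraically closed of characteristic $0$; $P$ has the standard grading. A graded Poisson automorphism $\phi$ (degree-preserving bijective algebra and Lie homomorphism) is identified with the matrix $[a_{ij}]$ where $\phi(x_i)=\sum_k a_{ik}x_k$. $\mathrm{PR}(P)$ is the set of Poisson reflections: finite-order graded Poisson automorphisms $\phi$ with $\phi|_{P_1}$ having eigenvalues $1,1,\xi$ for a primitive root of unity $\xi\neq1$. *)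

(* Defs.v *)
From HB Require Import structures.
From mathcomp Require Import all_boot all_order all_algebra.
From mathcomp Require Import mpoly.
Set Implicit Arguments. Unset Strict Implicit. Unset Printing Implicit Defensive.
Import Order.TTheory GRing.Theory.
Local Open Scope ring_scope.

Section Defs.
Variable k : closedFieldType.
Local Notation P := {mpoly k[3]}.

Definition x1 : P := 'X_(0 : 'I_3).
Definition x2 : P := 'X_(1 : 'I_3).
Definition x3 : P := 'X_(2 : 'I_3).

Definition brmx (i j : 'I_3) : P :=
  match nat_of_ord i, nat_of_ord j with
  | 1, 2 => 2%:R * x1 * x2
  | 2, 1 => - (2%:R * x1 * x2)
  | 2, 0 => x1 ^+ 2
  | 0, 2 => - x1 ^+ 2
  | _, _ => 0
  end.

Definition pbr (f g : P) : P :=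
  \sum_(i < 3) \sum_(j < 3) f^`M(i) * g^`M(j) * brmx i j.

Definition graded_poisson_aut (phi : P -> P) : Prop :=
  phi 1 = 1 /\
  {morph phi : f g / f + g} /\
  {morph phi : f g / f * g} /\
  (forall (c : k) f, phi (c *: f) = c *: phi f) /\
  bijective phi /\
  (forall (d : nat) f, f \is d.-homog -> phi f \is d.-homog) /\
  (forall f g, phi (pbr f g) = pbr (phi f) (phi g)).

(* The matrix [a_ij] with phi(x_i) = sum_k a_ik x_k. *)
Definition autmx (phi : P -> P) : 'M[k]_3 :=
  \matrix_(i < 3, j < 3) (phi 'X_i)@_(U_(j))%MM.

Definition poisson_reflection (phi : P -> P) : Prop :=
  [/\ graded_poisson_aut phi,
      (exists n : nat, (0 < n)%N /\ forall f, iter n phi f = f)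
    & exists xi : k, [/\ exists m : nat, m.-primitive_root xi,
                          xi != 1
                        & char_poly (autmx phi) = ('X - 1) ^+ 2 * ('X - xi%:P)]].

Definition mx3 (a11 a12 a13 a21 a22 a23 a31 a32 a33 : k) : 'M[k]_3 :=
  \matrix_(i < 3, j < 3)
    nth 0 (nth [::] [:: [:: a11; a12; a13]; [:: a21; a22; a23]; [:: a31; a32; a33]] i) j.

End Defs.

(* Main.v *)
Require Import Defs.
From HB Require Import structures.
From mathcomp Require Import all_boot all_order all_algebra.
From mathcomp Require Import mpoly.
From mathcomp Require Import ring.
Import GRing.Theory.
Local Open Scope ring_scope.

Section Aux.
Variable k : closedFieldType.
Local Notation P := {mpoly k[3]}.

Definition o0 : 'I_3 := @Ordinal 3 0 isT.
Definition o1 : 'I_3 := @Ordinal 3 1 isT.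
Definition o2 : 'I_3 := @Ordinal 3 2 isT.

Lemma sum3 (V : nmodType) (F : 'I_3 -> V) :
  \sum_(i < 3) F i = F o0 + F o1 + F o2.
Proof. by rewrite !big_ord_recl big_ord0 addr0 addrA; congr (F _ + F _ + F _); apply: val_inj. Qed.

Lemma prod3 (V : comPzRingType) (F : 'I_3 -> V) :
  \prod_(i < 3) F i = F o0 * F o1 * F o2.
Proof. by rewrite !big_ord_recl big_ord0 mulr1 mulrA; congr (F _ * F _ * F _); apply: val_inj. Qed.

Lemma x1E : x1 k = 'X_o0. Proof. by []. Qed.
Lemma x2E : x2 k = 'X_o1. Proof. by []. Qed.
Lemma x3E : x3 k = 'X_o2. Proof. by []. Qed.

Lemma mpoly_gen_ind (S : P -> Prop) :
  S 1 -> (forall i, S 'X_i) -> (forall f g, S f -> S g -> S (f + g)) ->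
  (forall f g, S f -> S g -> S (f * g)) -> (forall c f, S f -> S (c *: f)) ->
  forall p, S p.
Proof.
move=> S1 SX SD SM SZ.
have S0 : S 0 by have := SZ 0 1 S1; rewrite scale0r.
have SXn : forall f n, S f -> S (f ^+ n).
  move=> f n Sf; elim: n => [|n IH]; first by rewrite expr0.
  by rewrite exprS; apply: SM.
elim/mpolyind => [//|c m p _ _ Sp]; apply: SD => //; apply: SZ.
rewrite mpolyXE_id; apply: (big_ind S) => // i _; exact: SXn.
Qed.

Definition ismorph (phi : P -> P) :=
  [/\ phi 1 = 1, {morph phi : f g / f + g}, {morph phi : f g / f * g}
    & forall c f, phi (c *: f) = c *: phi f].

Lemma morph_eq (f g : P -> P) : ismorph f -> ismorph g ->
  (forall i, f 'X_i = g 'X_i) -> f =1 g.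
Proof.
move=> [f1 fD fM fZ] [g1 gD gM gZ] fX.
apply: mpoly_gen_ind => //.
- by rewrite f1 g1.
- by move=> p q ep eq; rewrite fD gD ep eq.
- by move=> p q ep eq; rewrite fM gM ep eq.
- by move=> c p ep; rewrite fZ gZ ep.
Qed.

Lemma morph0 phi : ismorph phi -> phi 0 = 0.
Proof. by move=> [_ _ _ Z]; have := Z 0 0; rewrite !scale0r. Qed.
Lemma morphN phi f : ismorph phi -> phi (- f) = - phi f.
Proof. by move=> [_ _ _ Z]; rewrite -scaleN1r Z scaleN1r. Qed.
Lemma morphX phi f n : ismorph phi -> phi (f ^+ n) = phi f ^+ n.
Proof.
move=> [p1 _ M _]; elim: n => [|n IH]; first by rewrite !expr0.
by rewrite !exprS M IH.
Qed.
Lemma morphn phi n : ismorph phi -> phi n%:R = n%:R.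
Proof.
move=> h; case: (h) => [p1 D _ _]; elim: n => [|n IH]; first by rewrite morph0.
by rewrite !mulrSr D IH p1.
Qed.

Lemma morph_comp f g : ismorph f -> ismorph g -> ismorph (f \o g).
Proof.
move=> [f1 fD fM fZ] [g1 gD gM gZ]; split => /=.
- by rewrite /= g1 f1.
- by move=> p q /=; rewrite gD fD.
- by move=> p q /=; rewrite gM fM.
- by move=> c p /=; rewrite gZ fZ.
Qed.

Lemma morph_iter f n : ismorph f -> ismorph (iter n f).
Proof.
move=> h; elim: n => [|n [i1 iD iM iZ]]; first by split.
case: h => [f1 fD fM fZ]; split => /=.
- by rewrite i1 f1.
- by move=> p q /=; rewrite iD fD.
- by move=> p q /=; rewrite iM fM.
- by move=> c p; rewrite iZ fZ.
Qed.

Definition lin (A : 'M[k]_3) (i : 'I_3) : P := \sum_(j < 3) A i j *: 'X_j.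
Definition phiA (A : 'M[k]_3) (f : P) : P := f \mPo [tuple lin A i | i < 3].

Lemma phiA_morph A : ismorph (phiA A).
Proof.
split; rewrite /phiA.
- exact: comp_mpoly1.
- exact: comp_mpolyD.
- by move=> f g; rewrite rmorphM.
- by move=> c f; rewrite comp_mpolyZ.
Qed.

Lemma phiA_X A i : phiA A 'X_i = lin A i.
Proof. by rewrite /phiA comp_mpolyXU -tnth_nth tnth_mktuple. Qed.

Lemma autmx_phiA A : autmx (phiA A) = A.
Proof.
apply/matrixP => i j; rewrite mxE phiA_X /lin raddf_sum /=.
rewrite (bigD1 j) //= mcoeffZ mcoeffXU eqxx mulr1 big1 ?addr0 // => l /negbTE ne.
by rewrite mcoeffZ mcoeffXU ne mulr0.
Qed.

Lemma lin_homog A i : lin A i \is 1.-homog.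
Proof.
apply: rpred_sum => j _; apply: dhomogZ; rewrite dhomogX; exact/eqP/mdeg1.
Qed.

Lemma phiA_homog A d f : f \is d.-homog -> phiA A f \is d.-homog.
Proof.
move=> hf; rewrite (mpolyE f) /phiA raddf_sum /= big_seq; apply: rpred_sum => m mf.
rewrite comp_mpolyZ; apply: dhomogZ; rewrite comp_mpolyX.
have <- : mdeg m = d by exact: (dhomog_mf hf mf).
rewrite mdegE.
apply: (big_ind2 (fun p d => p \is d.-homog)) => //.
- exact: dhomog1.
- by move=> p1 d1 p2 d2 h1 h2; exact: dhomogM.
- move=> i _; rewrite tnth_mktuple -[X in X.-homog]mul1n; apply: dhomogMn.
  exact: lin_homog.
Qed.


Lemma phiA_Z A c f : phiA A (c *: f) = c *: phiA A f.
Proof. by case: (phiA_morph A). Qed.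

Lemma phiA_lin B C i : phiA C (lin B i) = lin (B *m C) i.
Proof.
rewrite {1}/lin /phiA raddf_sum /=.
under eq_bigr do rewrite comp_mpolyZ -/(phiA C _) phiA_X /lin scaler_sumr.
rewrite exchange_big /lin; apply: eq_bigr => l _.
rewrite mxE scaler_suml; apply: eq_bigr => j _; by rewrite scalerA.
Qed.

Lemma phiA_comp B C f : phiA C (phiA B f) = phiA (B *m C) f.
Proof.
apply: (@morph_eq (phiA C \o phiA B) (phiA (B *m C))) => //.
- apply: morph_comp; exact: phiA_morph.
- exact: phiA_morph.
- by move=> i /=; rewrite !phiA_X phiA_lin.
Qed.

Lemma lin1 i : lin 1%:M i = 'X_i.
Proof.
rewrite /lin (bigD1 i) //= mxE eqxx scale1r big1 ?addr0 // => j /negbTE ne.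
by rewrite mxE eq_sym ne scale0r.
Qed.

Lemma phiA1 f : phiA 1%:M f = f.
Proof.
apply: (@morph_eq _ id); first exact: phiA_morph.
- by split.
- by move=> i; rewrite phiA_X lin1.
Qed.

Lemma phiA_bij A : A \in unitmx -> bijective (phiA A).
Proof.
move=> uA; exists (phiA (invmx A)) => f.
- by rewrite phiA_comp mulmxV // phiA1.
- by rewrite phiA_comp mulVmx // phiA1.
Qed.

Lemma mderivXU (j l : 'I_3) : ('X_j : P)^`M(l) = (j == l)%:R.
Proof.
rewrite mderivX mnm1E; case: (eqVneq j l) => [->|ne] /=.
- have -> : (U_(l) - U_(l))%MM = 0%MM.
    by apply/mnmP => t; rewrite mnmBE subnn mnm0E.
  by rewrite mpolyX0 scale1r.
- by rewrite scale0r.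
Qed.

Lemma mderiv_lin A i l : (lin A i)^`M(l) = (A i l)%:MP.
Proof.
rewrite /lin raddf_sum /=.
under eq_bigr do rewrite mderivZ mderivXU.
rewrite (bigD1 l) //= eqxx big1 ?addr0 => [|j /negbTE ->]; last by rewrite scaler0.
by rewrite -mul_mpolyC mulr1.
Qed.

Lemma pbrDl (f g h : P) : pbr (f + g) h = pbr f h + pbr g h.
Proof.
rewrite /pbr -big_split; apply: eq_bigr => i _; rewrite -big_split.
by apply: eq_bigr => j _; rewrite mderivD !mulrDl.
Qed.

Lemma pbrDr (f g h : P) : pbr h (f + g) = pbr h f + pbr h g.
Proof.
rewrite /pbr -big_split; apply: eq_bigr => i _; rewrite -big_split.
by apply: eq_bigr => j _; rewrite mderivD mulrDr !mulrDl.
Qed.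

Lemma pbrZl c (f h : P) : pbr (c *: f) h = c *: pbr f h.
Proof.
rewrite /pbr scaler_sumr; apply: eq_bigr => i _; rewrite scaler_sumr.
by apply: eq_bigr => j _; rewrite mderivZ -!scalerAl.
Qed.

Lemma pbrZr c (f h : P) : pbr h (c *: f) = c *: pbr h f.
Proof.
rewrite /pbr scaler_sumr; apply: eq_bigr => i _; rewrite scaler_sumr.
by apply: eq_bigr => j _; rewrite mderivZ -scalerAr -scalerAl.
Qed.

Lemma pbrMl (f g h : P) : pbr (f * g) h = f * pbr g h + g * pbr f h.
Proof.
rewrite /pbr !mulr_sumr -big_split; apply: eq_bigr => i _.
rewrite !mulr_sumr -big_split; apply: eq_bigr => j _; rewrite mderivM /=; ring.
Qed.

Lemma pbrMr (f g h : P) : pbr h (f * g) = f * pbr h g + g * pbr h f.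
Proof.
rewrite /pbr !mulr_sumr -big_split; apply: eq_bigr => i _.
rewrite !mulr_sumr -big_split; apply: eq_bigr => j _; rewrite mderivM /=; ring.
Qed.

Lemma deriv_eq (phi D1 D2 : P -> P) : ismorph phi ->
  (forall f g, D1 (f + g) = D1 f + D1 g) -> (forall f g, D2 (f + g) = D2 f + D2 g) ->
  (forall c f, D1 (c *: f) = c *: D1 f) -> (forall c f, D2 (c *: f) = c *: D2 f) ->
  (forall f g, D1 (f * g) = phi f * D1 g + phi g * D1 f) ->
  (forall f g, D2 (f * g) = phi f * D2 g + phi g * D2 f) ->
  (forall i, D1 'X_i = D2 'X_i) -> forall f, D1 f = D2 f.
Proof.
move=> [p1 _ _ _] A1 A2 Z1 Z2 M1 M2 HX.
have z1 : D1 1 = 0.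
  have := M1 1 1; rewrite mul1r p1 !mul1r => e.
  by apply: (addrI (D1 1)); rewrite addr0 -e.
have z2 : D2 1 = 0.
  have := M2 1 1; rewrite mul1r p1 !mul1r => e.
  by apply: (addrI (D2 1)); rewrite addr0 -e.
apply: mpoly_gen_ind => //.
- by rewrite z1 z2.
- by move=> f g e1 e2; rewrite A1 A2 e1 e2.
- by move=> f g e1 e2; rewrite M1 M2 e1 e2.
- by move=> c f e; rewrite Z1 Z2 e.
Qed.

Lemma pbr_morph phi : ismorph phi ->
  (forall i j, phi (pbr 'X_i 'X_j) = pbr (phi 'X_i) (phi 'X_j)) ->
  forall f g, phi (pbr f g) = pbr (phi f) (phi g).
Proof.
move=> hm; case: (hm) => [p1 pD pM pZ] HX.
have step1 : forall j f, phi (pbr f 'X_j) = pbr (phi f) (phi 'X_j).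
  move=> j; apply: (@deriv_eq phi
     (fun f => phi (pbr f 'X_j)) (fun f => pbr (phi f) (phi 'X_j))) => //.
  - by move=> f g; rewrite pbrDl pD.
  - by move=> f g; rewrite pD pbrDl.
  - by move=> c f; rewrite pbrZl pZ.
  - by move=> c f; rewrite pZ pbrZl.
  - by move=> f g; rewrite pbrMl pD !pM.
  - by move=> f g; rewrite pM pbrMl.
move=> f; apply: (@deriv_eq phi
     (fun g => phi (pbr f g)) (fun g => pbr (phi f) (phi g))) => //.
- by move=> g h; rewrite pbrDr pD.
- by move=> g h; rewrite pD pbrDr.
- by move=> c g; rewrite pbrZr pZ.
- by move=> c g; rewrite pZ pbrZr.
- by move=> g h; rewrite pbrMr pD !pM.
- by move=> g h; rewrite pM pbrMr.
Qed.


Lemma pbr_lin A B i j : pbr (lin A i) (lin B j) =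
  \sum_(a < 3) \sum_(b < 3) ((A i a)%:MP * (B j b)%:MP * brmx k a b).
Proof. by apply: eq_bigr => a _; apply: eq_bigr => b _; rewrite !mderiv_lin. Qed.

Lemma pbrXX i j : pbr ('X_i : P) 'X_j = brmx k i j.
Proof.
rewrite -[X in pbr X _]lin1 -[X in pbr _ X]lin1 pbr_lin.
rewrite (bigD1 i) //= [X in _ + X]big1 ?addr0; last first.
  by move=> a /negbTE ne; apply: big1 => b _; rewrite !mxE eq_sym ne mulr0n mpolyC0 !mul0r.
rewrite (bigD1 j) //= [X in _ + X]big1 ?addr0; last first.
  by move=> b /negbTE ne; rewrite !mxE (eq_sym j) ne mulr0n mpolyC0 mulr0 mul0r.
by rewrite !mxE !eqxx mulr1n mpolyC1 !mul1r.
Qed.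

Lemma gen_ok a b c d i j :
  phiA (mx3 a 0 0 0 b 0 c d a) (pbr 'X_i 'X_j) =
  pbr (lin (mx3 a 0 0 0 b 0 c d a) i) (lin (mx3 a 0 0 0 b 0 c d a) j).
Proof.
have hm := phiA_morph (mx3 a 0 0 0 b 0 c d a).
case: (hm) => [p1 pD pM pZ].
rewrite pbrXX pbr_lin !sum3.
case: i => [[|[|[|//]]] Hi]; case: j => [[|[|[|//]]] Hj].
all: rewrite /brmx /= ?x1E ?x2E ?(morph0 _ hm) ?(morphN _ _ hm) ?pM ?(morphX _ _ _ hm) ?(morphn _ _ hm) ?pM ?phiA_X.
all: rewrite ?phiA_X /lin ?sum3 !mxE /=.
all: rewrite -?mul_mpolyC ?mpolyC0.
all: ring.
Qed.

Lemma homog1_lin (p : P) : p \is 1.-homog -> p = \sum_(j < 3) p@_U_(j) *: 'X_j.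
Proof.
move=> hp; apply/mpolyP => m; rewrite raddf_sum /=.
under eq_bigr do rewrite mcoeffZ mcoeffX.
case: (boolP (mdeg m == 1%N)) => [/mdeg1P [i /eqP ->] | hm].
- rewrite (bigD1 i) //= eqxx mulr1 big1 ?addr0 // => j /negbTE ne.
  by rewrite eq_mnm1 ne mulr0.
- rewrite (dhomog_nemf_coeff hp hm) big1 // => j _.
  case: eqP => [e|]; last by rewrite mulr0.
  by move: hm; rewrite -e mdeg1 eqxx.
Qed.

Lemma gpa_lin (phi : P -> P) : graded_poisson_aut phi -> forall i, phi 'X_i = lin (autmx phi) i.
Proof.
move=> [_ [_ [_ [_ [_ [hH _]]]]]] i.
have h1 : phi 'X_i \is 1.-homog by apply: hH; rewrite dhomogX; exact/eqP/mdeg1.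
by rewrite {1}(homog1_lin _ h1) /lin; apply: eq_bigr => j _; rewrite mxE.
Qed.

Definition vv (p q r : k) (t : 'I_3) : k := nth 0 [:: p; q; r] t.

Lemma meval_lin A i v : meval v (lin A i) = \sum_(j < 3) A i j * v j.
Proof.
rewrite /lin raddf_sum; apply: eq_bigr => j _ /=; by rewrite mevalZ mevalXU.
Qed.

Lemma meval_pbr A i j v : meval v (pbr (lin A i) (lin A j)) =
  \sum_(a < 3) \sum_(b < 3) A i a * A j b * meval v (brmx k a b).
Proof.
rewrite pbr_lin raddf_sum; apply: eq_bigr => a _; rewrite raddf_sum; apply: eq_bigr => b _ /=.
by rewrite !rmorphM /= !mevalC.
Qed.

Lemma lin3 A i : lin A i = A i o0 *: 'X_o0 + A i o1 *: 'X_o1 + A i o2 *: 'X_o2.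
Proof. by rewrite /lin sum3. Qed.

Lemma Xnz i : ('X_i : P) <> 0.
Proof.
move=> h; have := @mcoeffXU 3 k i i; rewrite h mcoeff0 eqxx => /eqP.
by rewrite eq_sym oner_eq0.
Qed.

Lemma ordE0 (H : (0 < 3)%N) : Ordinal H = o0. Proof. exact: val_inj. Qed.
Lemma ordE1 (H : (1 < 3)%N) : Ordinal H = o1. Proof. exact: val_inj. Qed.
Lemma ordE2 (H : (2 < 3)%N) : Ordinal H = o2. Proof. exact: val_inj. Qed.

Lemma gpa_form (char0 : [pchar k] =i pred0) (phi : P -> P) : graded_poisson_aut phi ->
  exists a b c d, [/\ a != 0, b != 0 & autmx phi = mx3 a 0 0 0 b 0 c d a].
Proof.
move=> hg; have HL := gpa_lin _ hg.
case: hg => [p1 [pD [pM [pZ [pB [_ HB]]]]]].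
have hm : ismorph phi by split.
set A := autmx phi.
have E : forall i j, phi (brmx k i j) = pbr (lin A i) (lin A j).
  by move=> i j; rewrite -pbrXX HB !HL.
have HA : forall i, phi 'X_i = lin A i := HL.
have ev : forall v i j, meval v (phi (brmx k i j)) =
   \sum_(a < 3) \sum_(b < 3) A i a * A j b * meval v (brmx k a b).
  by move=> v i j; rewrite E meval_pbr.
have e1 := ev (vv 0 1 0) o2 o0.
have e2 := ev (vv 0 0 1) o2 o0.
move: e1 e2; rewrite !sum3 /brmx /= ?x1E ?x2E ?expr2 ?pM ?(morphN _ _ hm) ?(morphn _ _ hm) ?pM ?HA.
rewrite ?mevalN ?mevalM ?meval_lin ?sum3 ?mevalMn ?meval1 ?meval0 ?mevalXU /vv /=.
rewrite !(mulr0, mul0r, mulr1, mul1r, addr0, add0r, oppr0, mulrN, mulNr).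
move=> /eqP; rewrite mulf_eq0 orbb => /eqP h01.
move=> /eqP; rewrite mulf_eq0 orbb => /eqP h02.
have inj := bij_inj pB.
have h00 : A o0 o0 != 0.
  apply/eqP => h; apply: (@Xnz o0); apply: inj.
  by rewrite (morph0 _ hm) HA lin3 h h01 h02 !scale0r !addr0.
have e3 := ev (vv 1 0 0) o2 o0.
have e4 := ev (vv 1 0 0) o0 o1.
have e5 := ev (vv 1 0 0) o1 o2.
move: e3 e4 e5; rewrite !sum3 /brmx /= ?x1E ?x2E ?expr2 ?pM ?(morph0 _ hm) ?(morphN _ _ hm) ?(morphn _ _ hm) ?pM ?HA.
rewrite ?mevalN ?mevalM ?meval_lin ?sum3 ?mevalMn ?meval1 ?meval0 ?mevalXU /vv /= h01 h02.
rewrite !(mulr0, mul0r, mulr1, mul1r, addr0, add0r, oppr0, mulrN, mulNr).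
move=> /(mulIf h00) h22.
move/eqP; rewrite eq_sym oppr_eq0 mulf_eq0 (negbTE h00) /= => /eqP h12.
rewrite h12 mul0r addr0 -h22 => e5.
have h3 : (3%:R : k) != 0 by move/pcharf0P: char0 => ->.
have h10 : A o1 o0 = 0.
  have h : (2 * A o0 o0 * A o1 o0) + A o1 o0 * A o0 o0 = 0 by rewrite e5 addNr.
  have : A o1 o0 * (3%:R * A o0 o0) = 0 by rewrite -h; ring.
  by move/eqP; rewrite !mulf_eq0 (negbTE h3) (negbTE h00) !orbF => /eqP.
have h11 : A o1 o1 != 0.
  apply/eqP => h'; apply: (@Xnz o1); apply: inj.
  by rewrite (morph0 _ hm) HA lin3 h' h10 h12 !scale0r !addr0.
exists (A o0 o0), (A o1 o1), (A o2 o0), (A o2 o1); split => //.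
apply/matrixP => i j; rewrite /mx3 [RHS]mxE.
case: i => [[|[|[|//]]] Hi]; case: j => [[|[|[|//]]] Hj] /=.
all: by rewrite ?ordE0 ?ordE1 ?ordE2 ?h01 ?h02 ?h10 ?h12.
Qed.


Lemma mx3_trig (a b c d : k) : is_trig_mx (mx3 a 0 0 0 b 0 c d a).
Proof.
apply/is_trig_mxP => i j; rewrite /mx3 mxE.
by case: i => [[|[|[|//]]] Hi]; case: j => [[|[|[|//]]] Hj].
Qed.

Lemma mx3_charpoly (a b c d : k) :
  char_poly (mx3 a 0 0 0 b 0 c d a) = ('X - a%:P) * ('X - b%:P) * ('X - a%:P).
Proof. by rewrite char_poly_trig ?mx3_trig // prod3 /mx3 !mxE. Qed.

Lemma mx3_gpa (a b c d : k) : a != 0 -> b != 0 ->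
  graded_poisson_aut (phiA (mx3 a 0 0 0 b 0 c d a)).
Proof.
move=> ha hb; case: (phiA_morph (mx3 a 0 0 0 b 0 c d a)) => p1 pD pM pZ.
split => //; split => //; split => //; split => //; split.
  apply: phiA_bij; rewrite unitmxE unitfE det_trig ?mx3_trig // prod3 /mx3 !mxE /=.
  by rewrite !mulf_neq0.
split; first by move=> dd f; exact: phiA_homog.
apply: pbr_morph; first exact: phiA_morph.
by move=> i j; rewrite !phiA_X; exact: gen_ok.
Qed.


Lemma refl_form (char0 : [pchar k] =i pred0) (phi : P -> P) :
  poisson_reflection phi ->
  exists xi d : k, [/\ (exists m : nat, (0 < m)%N /\ xi ^+ m = 1),
                      xi != 1 & autmx phi = mx3 1 0 0 0 xi 0 0 d 1].
Proof.
case=> hg [n [n0 Hn]] [xi [_ hxi hcp]].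
have HL := gpa_lin _ hg.
have [a [b [c [d [ha hb hA]]]]] := gpa_form char0 _ hg.
case: (hg) => [p1 [pD [pM [pZ _]]]]; have hm : ismorph phi by split.
rewrite hA mx3_charpoly in hcp.
have hx x : (x - a) * (x - b) * (x - a) = (x - 1) ^+ 2 * (x - xi).
  by have := congr1 (fun p => p.[x]) hcp; rewrite !hornerE.
have a1 : a = 1.
  have := hx a; rewrite subrr !(mulr0, mul0r) => /esym/eqP.
  rewrite mulf_eq0 expf_eq0 /= !subr_eq0 => /orP [/eqP //| /eqP axi].
  have := hx 1; rewrite subrr expr0n /= mul0r => /eqP.
  rewrite axi !mulf_eq0 !subr_eq0 (eq_sym 1 xi) (negbTE hxi) /= orbF => /eqP b1.
  have h0 := hx 0.
  have : xi * (xi - 1) = 0.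
    transitivity ((0 - 1) ^+ 2 * (0 - xi) - (0 - a) * (0 - b) * (0 - a)).
      by rewrite -b1 axi; ring.
    by rewrite h0 subrr.
  move/eqP; rewrite mulf_eq0 subr_eq0 (negbTE hxi) orbF -axi (negbTE ha) //.
have bxi : b = xi.
  have := hx b; rewrite subrr !(mulr0, mul0r) => /esym/eqP.
  rewrite mulf_eq0 expf_eq0 /= !subr_eq0 => /orP [/eqP b1| /eqP //].
  have := hx xi; rewrite subrr mulr0 a1 b1 => /eqP.
  by rewrite !mulf_eq0 !subr_eq0 (negbTE hxi).
have hX0 : phi 'X_o0 = 'X_o0.
  by rewrite HL hA lin3 /mx3 !mxE /= a1 !scale0r scale1r !addr0.
have hX1 : phi 'X_o1 = b *: 'X_o1.
  by rewrite HL hA lin3 /mx3 !mxE /= !scale0r add0r addr0.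
have hX2 : phi 'X_o2 = c *: 'X_o0 + d *: 'X_o1 + 'X_o2.
  by rewrite HL hA lin3 /mx3 !mxE /= a1 scale1r.
have it1 : forall j, iter j phi 'X_o1 = (b ^+ j) *: 'X_o1.
  elim=> [|j IH]; first by rewrite expr0 scale1r.
  by rewrite /= IH pZ hX1 scalerA -exprSr.
have it2 : forall j, exists e, iter j phi 'X_o2 = (c *+ j) *: 'X_o0 + e *: 'X_o1 + 'X_o2.
  elim=> [|j [e IH]]; first by exists 0; rewrite /= !scale0r !add0r.
  exists (e * b + d); rewrite /= IH !pD !pZ hX0 hX1 hX2 scalerA mulrSr.
  rewrite -!mul_mpolyC !mpolyCD !mpolyCM; ring.
have c0 : c = 0.
  have [e He] := it2 n; have := congr1 (mcoeff U_(o0)) He; rewrite Hn.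
  rewrite !mcoeffD !mcoeffZ !mcoeffXU /= mulr1 mulr0 !addr0 => /esym/eqP.
  rewrite -(mulr_natr c n) mulf_eq0; move/pcharf0P: char0 => ->.
  by rewrite (gtn_eqF n0) orbF => /eqP.
exists xi, d; split => //.
  exists n; split => //.
  have := congr1 (mcoeff U_(o1)) (it1 n); rewrite Hn.
  by rewrite mcoeffZ !mcoeffXU eqxx mulr1 bxi.
by rewrite hA a1 bxi c0.
Qed.


Lemma refl_mk (xi d : k) m : (0 < m)%N -> xi ^+ m = 1 -> xi != 1 ->
  poisson_reflection (phiA (mx3 1 0 0 0 xi 0 0 d 1)).
Proof.
move=> m0 hm hxi.
have xi0 : xi != 0.
  apply/eqP => h; move: hm; rewrite h expr0n (gtn_eqF m0) => /eqP.
  by rewrite eq_sym oner_eq0.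
have hg := mx3_gpa 1 xi 0 d (oner_neq0 k) xi0.
have hmo := phiA_morph (mx3 1 0 0 0 xi 0 0 d 1).
case: (hmo) => [p1 pD pM pZ].
set phi := phiA _ in hg hmo p1 pD pM pZ *.
have hX0 : phi 'X_o0 = 'X_o0.
  by rewrite /phi phiA_X lin3 /mx3 !mxE /= !scale0r scale1r !addr0.
have hX1 : phi 'X_o1 = xi *: 'X_o1.
  by rewrite /phi phiA_X lin3 /mx3 !mxE /= !scale0r add0r addr0.
have hX2 : phi 'X_o2 = d *: 'X_o1 + 'X_o2.
  by rewrite /phi phiA_X lin3 /mx3 !mxE /= scale0r scale1r add0r.
split => //.
- exists m; split => //.
  apply: (@morph_eq (iter m phi) id); [exact: morph_iter | by split | ].
  have it0 : forall j, iter j phi 'X_o0 = 'X_o0.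
    by elim=> [|j IH] //=; rewrite IH hX0.
  have it1 : forall j, iter j phi 'X_o1 = (xi ^+ j) *: 'X_o1.
    elim=> [|j IH]; first by rewrite expr0 scale1r.
    by rewrite /= IH pZ hX1 scalerA -exprSr.
  have it2 : forall j, exists e, iter j phi 'X_o2 = e *: 'X_o1 + 'X_o2 /\
                                 e * (xi - 1) = d * (xi ^+ j - 1).
    elim=> [|j [e [IH He]]]; first by exists 0; rewrite /= scale0r add0r expr0 subrr mulr0 mul0r.
    exists (e * xi + d); split.
      by rewrite /= IH pD pZ hX1 hX2 scalerA addrA -scalerDl.
    transitivity (xi * (e * (xi - 1)) + d * (xi - 1)); first by ring.
    by rewrite He exprS; ring.
  move=> i; case: i => [[|[|[|//]]] Hi]; rewrite ?ordE0 ?ordE1 ?ordE2 /=.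
  + exact: it0.
  + by rewrite it1 hm scale1r.
  + have [e [He1 He2]] := it2 m; rewrite He1.
    move: He2; rewrite hm subrr mulr0 => /eqP; rewrite mulf_eq0 subr_eq0 (negbTE hxi) orbF.
    by move/eqP => ->; rewrite scale0r add0r.
- exists xi; split => //.
    by have [p hp _] := prim_order_exists m0 hm; exists p.
  rewrite autmx_phiA mx3_charpoly polyC1; ring.
Qed.

End Aux.

Theorem lemma3p2p1 (k : closedFieldType) (char0 : [pchar k] =i pred0) :
  (forall A : 'M[k]_3,
     (exists phi : {mpoly k[3]} -> {mpoly k[3]},
        graded_poisson_aut phi /\ autmx phi = A)
     <->
     (exists a b c d : k, [/\ a != 0, b != 0 & A = mx3 a 0 0 0 b 0 c d a]))
  /\
  (forall A : 'M[k]_3,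
     (exists phi : {mpoly k[3]} -> {mpoly k[3]},
        poisson_reflection phi /\ autmx phi = A)
     <->
     (exists xi d : k, [/\ (exists m : nat, (0 < m)%N /\ xi ^+ m = 1),
                          xi != 1
                        & A = mx3 1 0 0 0 xi 0 0 d 1])).
Proof.
split => A; split.
- by move=> [phi [hg <-]]; exact: (@gpa_form k char0 phi hg).
- move=> [a [b [c [d [ha hb ->]]]]]; exists (@phiA k (mx3 a 0 0 0 b 0 c d a)); split.
    exact: mx3_gpa.
  exact: autmx_phiA.
- by move=> [phi [hr <-]]; exact: (@refl_form k char0 phi hr).
- move=> [xi [d [[m [m0 hm]] hxi ->]]]; exists (@phiA k (mx3 1 0 0 0 xi 0 0 d 1)); split.
    exact: (@refl_mk k xi d m m0 hm hxi).
  exact: autmx_phiA.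
Qed.
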